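(* Let $x\in C[0,1]$ have Faber--Schauder development $$x=x(0)+(x(1)-x(0))e_\emptyset+\sum_{m=0}^\infty\sum_{k=0}^{2^m-1}\theta_{m,k}e_{m,k},\qquad \theta_{m,k}=2^{m/2}\Big(2x\big(\tfrac{2k+1}{2^{m+1}}\big)-x\big(\tfrac k{2^m}\big)-x\big(\tfrac{k+1}{2^m}\big)\Big),$$ and let $(\mathbb{T}_n)$ be the sequence of dyadic partitions. Then, for $t\in\bigcup_n\mathbb{T}_n$, the following conditions are equivalent. (a) The quadratic variation $\langle x\rangle_t$ (along the dyadic partitions) exists. (b) The limit $\ell_1(t):=\lim_{n\to\infty}\frac1{2^n}\sum_{m=0}^{n-1}\sum_{k=0}^{\lfloor (2^m-1)t\rfloor}\theta_{m,k}^2$ exists. (c) The limit $\ell_2(t):=\lim_{n\to\infty}\frac1{2^n}\sum_{k=0}^{\lfloor (2^n-1)t\rfloor}\theta_{n,k}^2$ exists. In this case, $\langle x\rangle_t=\ell_1(t)=\ell_2(t)$.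
   Context: The dyadic partitions are $\mathbb{T}_n=\{k2^{-n}: k=0,\dots,2^n\}$. For $s\in\mathbb{T}_n$, $s'$ denotes the successor of $s$ in $\mathbb{T}_n$ ($s'=\min\{t\in\mathbb{T}_n: t>s\}$ if $s<1$, and $s'=1$ if $s=1$). For $x\in C[0,1]$, $\langle x\rangle^n_t:=\sum_{s\in\mathbb{T}_n,\,s\le t}(x(s')-x(s))^2$, and $x$ admits the quadratic variation $\langle x\rangle_t$ at $t$ if $\langle x\rangle_t:=\lim_{n\to\infty}\langle x\rangle^n_t$ exists. The Faber--Schauder functions on $[0,1]$ are $e_\emptyset(t)=t$, $e_{0,0}(t)=\max\{0,\min\{t,1-t\}\}$, and $e_{n,k}(t)=2^{-n/2}e_{0,0}(2^nt-k)$ for $n\ge1$, $k=0,\dots,2^n-1$; every $x\in C[0,1]$ has the uniformly convergent development stated in the claim. *)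

(* Defs.v *)
From HB Require Import structures.
From mathcomp Require Import all_boot all_order all_algebra.
From mathcomp Require Import all_classical all_reals all_analysis.
Set Implicit Arguments. Unset Strict Implicit. Unset Printing Implicit Defensive.
Import Order.TTheory GRing.Theory Num.Theory.
Import numFieldNormedType.Exports.
Local Open Scope ring_scope.

Definition dyad {R : realType} (n k : nat) : R := k%:R / (2%:R ^+ n).

Definition in_dyadic_partitions {R : realType} (t : R) : Prop :=
  exists n k : nat, (k <= 2 ^ n)%N /\ t = dyad n k.

(* Successor index of k in T_n (s' = 1 if s = 1). *)
Definition succ_idx (n k : nat) : nat := minn k.+1 (2 ^ n).

Definition qv_approx {R : realType} (x : R -> R) (t : R) (n : nat) : R :=
  \sum_(0 <= k < (2 ^ n).+1 | dyad n k <= t)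
     (x (dyad n (succ_idx n k)) - x (dyad n k)) ^+ 2.

Definition fs_coef {R : realType} (x : R -> R) (m k : nat) : R :=
  Num.sqrt (2%:R ^+ m) *
    (2%:R * x ((2 * k + 1)%:R / 2%:R ^+ m.+1) - x (dyad m k) - x (dyad m k.+1)).

(* floor((2^m - 1) t) for t >= 0, as a natural number. *)
Definition fl {R : realType} (m : nat) (t : R) : nat :=
  Num.truncn ((2%:R ^+ m - 1) * t).

Definition ell1_seq {R : realType} (x : R -> R) (t : R) (n : nat) : R :=
  (2%:R ^+ n)^-1 *
    \sum_(0 <= m < n) \sum_(0 <= k < (fl m t).+1) fs_coef x m k ^+ 2.

Definition ell2_seq {R : realType} (x : R -> R) (t : R) (n : nat) : R :=
  (2%:R ^+ n)^-1 * \sum_(0 <= k < (fl n t).+1) fs_coef x n k ^+ 2.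

(* Main.v *)
Require Import Defs.
From HB Require Import structures.
From mathcomp Require Import all_boot all_order all_algebra.
From mathcomp Require Import all_classical all_reals all_analysis.
From mathcomp Require Import ring lra.
Import Order.TTheory GRing.Theory Num.Theory.
Import numFieldNormedType.Exports.
Local Open Scope ring_scope.
Local Open Scope classical_set_scope.

Lemma leR_eq (R : numDomainType) (a b : R) : a = b -> a <= b.
Proof. by move=> ->. Qed.

Lemma averaging (R : realType) (u c : nat -> R) (N : nat) (L : R) :
  (forall n, (N <= n)%N -> u n.+1 = (u n + c n) / 2) ->
  c @ \oo --> L -> u @ \oo --> L.
Proof.
move=> hu /cvgrPdist_le hc; apply/cvgrPdist_le => eps eps0.
have e2 : 0 < eps / 2 by rewrite divr_gt0.
have [M0 _ HM] := hc _ e2.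
pose M := maxn N M0.
pose C := `|L - u M|.
have HC : forall k, `|L - u (M + k)%N| <= C * (2^-1) ^+ k + eps / 2.
  elim=> [|k IH]; first by rewrite addn0 expr0 mulr1 lerDl ltW.
  rewrite addnS hu; last by rewrite (leq_trans (leq_maxl N M0)) ?leq_addr.
  have hck : `|L - c (M + k)%N| <= eps / 2.
    by apply: HM; rewrite /= (leq_trans (leq_maxr N M0)) ?leq_addr.
  have -> : L - (u (M + k)%N + c (M + k)%N) / 2 = ((L - u (M + k)%N) + (L - c (M + k)%N)) / 2.
    by field.
  rewrite normrM normfV (ger0_norm (ler0n _ 2)) exprS mulrCA.
  have := ler_normD (L - u (M + k)%N) (L - c (M + k)%N).
  move: IH hck; set X := C * _; set A := `|_ + _|; set B := `|L - u _|; set D := `|L - c _|.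
  move=> IH hck HA.
  apply: (le_trans (ler_wpM2r _ (le_trans HA (lerD IH hck)))); first by rewrite invr_ge0 ler0n.
  by apply: leR_eq; rewrite /X; field.
have C1 : 0 < C + 1 by have := normr_ge0 (L - u M); rewrite /C; lra.
have e3 : 0 < eps / 2 / (C + 1) by rewrite divr_gt0.
have /cvgrPdist_le hg := @cvg_expr R (2^-1) (ltac:(rewrite ger0_norm ?invr_ge0 ?ler0n // invf_lt1 ?ltr1n //)).
have [K0 _ HK] := hg _ e3.
exists (M + K0)%N => // n /= Hn.
have -> : n = (M + (n - M))%N by rewrite subnKC // (leq_trans (leq_addr K0 M)).
apply: (le_trans (HC _)).
have hk := HK (n - M)%N ltac:(rewrite /= leq_subRL ?(leq_trans (leq_addr K0 M)) //).
rewrite sub0r normrN ger0_norm ?exprn_ge0 ?invr_ge0 ?ler0n // in hk.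
have : C * (2^-1) ^+ (n - M) <= eps / 2.
  apply: (le_trans (ler_wpM2l (normr_ge0 _) hk)).
  rewrite -/C (_ : C * (eps/2/(C+1)) = eps/2 - eps/2/(C+1)); last by field; rewrite gt_eqF.
  by rewrite gerBl divr_ge0 // ltW.
move=> H; apply: (le_trans (lerD H (lexx _))).
by apply: leR_eq; field.
Qed.

Lemma cont_seq (R : realType) (x : R -> R)
  (hx : {within `[0%R, 1%R], continuous x}) (t : R) (t01 : 0 <= t <= 1)
  (s : nat -> R) : (forall n, 0 <= s n <= 1) -> s @ \oo --> t ->
  (fun n => x (s n)) @ \oo --> x t.
Proof.
move=> s01 hs.
have := (@subspace_continuousP R^o `[0%R, 1%R] R^o x).1 hx t.
move=> /(_ ltac:(by rewrite /= in_itv /=)) H.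
apply: (cvg_trans _ H) => P /=.
rewrite /within /= => /hs [M _ HM]; exists M => // n /HM /=; apply.
by rewrite in_itv /=.
Qed.

Lemma cvg_sq (R : realType) (u : nat -> R) (a : R) :
  u @ \oo --> a -> (fun n => u n ^+ 2) @ \oo --> a ^+ 2.
Proof. by move=> h; rewrite expr2; under eq_fun do rewrite expr2; exact: cvgM. Qed.

Lemma diff0_iff (R : realType) (Q P : nat -> R) (L : R) :
  (fun n => Q n - P n) @ \oo --> 0 -> (Q @ \oo --> L <-> P @ \oo --> L).
Proof.
move=> hd; split => h.
  have -> : P = (fun n => Q n - (Q n - P n)) by apply/funext => n; rewrite opprB addrC subrK.
  by rewrite -[L]subr0; apply: cvgB.
have -> : Q = (fun n => P n + (Q n - P n)) by apply/funext => n; rewrite addrC subrK.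
by rewrite -[L]addr0; apply: cvgD.
Qed.

Lemma assemble3 (R : realType) (Q E1 E2 : nat -> R) :
  (forall L : R, Q @ \oo --> L <-> E1 @ \oo --> L) ->
  (forall L : R, Q @ \oo --> L <-> E2 @ \oo --> L) ->
  [/\ (cvgn Q <-> cvgn E1), (cvgn Q <-> cvgn E2) &
      (cvgn Q -> limn Q = limn E1 /\ limn Q = limn E2)].
Proof.
move=> h1 h2; split.
- split=> /cvg_ex [L HL]; apply/cvg_ex; exists L; by [apply/h1 | apply/h1].
- split=> /cvg_ex [L HL]; apply/cvg_ex; exists L; by [apply/h2 | apply/h2].
- move=> /cvg_ex [L HL]; rewrite (cvg_lim _ HL) //.
  by rewrite (cvg_lim _ ((h1 L).1 HL)) // (cvg_lim _ ((h2 L).1 HL)).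
Qed.

Lemma ell12 (R : realType) (E1 E2 : nat -> R) :
  (forall n, E1 n.+1 = (E1 n + E2 n) / 2) ->
  forall L : R, E1 @ \oo --> L <-> E2 @ \oo --> L.
Proof.
move=> hr L; split => h; last exact: (@averaging R E1 E2 0%N L (fun n _ => hr n)).
have h' : (fun n => E1 n.+1) @ \oo --> L by rewrite (cvg_shiftS E1).
have -> : E2 = (fun n => 2 * E1 n.+1 - E1 n).
  by apply/funext => n; rewrite hr; field.
have -> : L = 2 * L - L by ring.
by apply: cvgB => //; apply: cvgMr.
Qed.

Definition Jn (N j n : nat) : nat := (j * 2 ^ (n - N))%N.

Definition Pseq {R : realType} (x : R -> R) (N j n : nat) : R :=
  \sum_(0 <= k < Jn N j n) (x (dyad n k.+1) - x (dyad n k)) ^+ 2.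

Lemma pow2_gt0 (R : realType) n : 0 < (2%:R : R) ^+ n.
Proof. by rewrite exprn_gt0 ?ltr0n. Qed.

Lemma pow2_neq0 (R : realType) n : (2%:R : R) ^+ n != 0.
Proof. by rewrite gt_eqF ?pow2_gt0. Qed.

Lemma dyad_le (R : realType) n k k' : (@dyad R n k <= dyad n k') = (k <= k')%N.
Proof. by rewrite /dyad ler_pM2r ?invr_gt0 ?pow2_gt0 // ler_nat. Qed.

Lemma dyadJ (R : realType) N j n : (N <= n)%N -> @dyad R n (Jn N j n) = dyad N j.
Proof.
move=> Hn; rewrite /dyad /Jn natrM natrX -{2}(subnKC Hn) exprD.
by field; rewrite !pow2_neq0.
Qed.

Lemma Jle N j n : (j <= 2 ^ N)%N -> (N <= n)%N -> (Jn N j n <= 2 ^ n)%N.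
Proof.
by move=> hj Hn; rewrite /Jn -{2}(subnKC Hn) expnD leq_mul2r hj orbT.
Qed.

Lemma dyad_double (R : realType) n k : @dyad R n.+1 k.*2 = dyad n k.
Proof. by rewrite /dyad -muln2 natrM exprSr; field; rewrite pow2_neq0. Qed.

Lemma dyadS (R : realType) n k : @dyad R n k.+1 = dyad n k + (2^-1) ^+ n.
Proof. by rewrite /dyad exprVn -natr1 mulrDl mul1r. Qed.

Lemma Q_decomp (R : realType) (x : R -> R) N j n :
  (j <= 2 ^ N)%N -> (N <= n)%N ->
  qv_approx x (dyad N j) n =
  Pseq x N j n + (x (dyad n (succ_idx n (Jn N j n))) - x (dyad N j)) ^+ 2.
Proof.
move=> hj Hn; have JS : (Jn N j n <= 2 ^ n)%N by exact: Jle.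
rewrite /qv_approx -(@dyadJ R N j n Hn) /Pseq.
under eq_bigl => k do rewrite dyad_le.
rewrite (_ : \sum_(0 <= k < (2 ^ n).+1 | (k <= Jn N j n)%N) _ =
             \sum_(0 <= k < (Jn N j n).+1) (x (dyad n (succ_idx n k)) - x (dyad n k)) ^+ 2); last first.
  by rewrite (big_nat_widen _ _ _ _ _ (_ : (Jn N j n).+1 <= (2^n).+1)%N).
rewrite big_nat_recr //=; congr (_ + _).
apply: eq_big_nat => k /andP [_ hk].
rewrite /succ_idx (minn_idPl _) //.
exact: leq_trans hk JS.
Qed.

Lemma dyad_01 (R : realType) n k : (k <= 2 ^ n)%N -> 0 <= @dyad R n k <= 1.
Proof.
move=> hk; rewrite /dyad; apply/andP; split.
  by rewrite divr_ge0 ?ler0n // ltW // pow2_gt0.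
by rewrite ler_pdivrMr ?pow2_gt0 // mul1r -natrX ler_nat.
Qed.

Lemma inv2n_cvg (R : realType) : ((2^-1 : R) ^+ n) @[n --> \oo] --> 0.
Proof.
apply: cvg_expr; rewrite ger0_norm ?invr_ge0 ?ler0n // invf_lt1 ?ltr1n //.
Qed.

Lemma QP_cvg (R : realType) (x : R -> R)
  (hx : {within `[0%R, 1%R], continuous x}) N j :
  (j <= 2 ^ N)%N ->
  (fun n => qv_approx x (dyad N j) n - Pseq x N j n) @ \oo --> 0.
Proof.
move=> hj.
pose s n := @dyad R n (succ_idx n (Jn N j n)).
have s01 : forall n, 0 <= s n <= 1.
  by move=> n; apply: dyad_01; rewrite /succ_idx geq_minr.
have t01 : 0 <= @dyad R N j <= 1 by apply: dyad_01.
have hs : s @ \oo --> dyad N j.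
  apply: (@squeeze_cvgr _ _ _ _ (fun=> dyad N j) (fun n => dyad N j + (2^-1) ^+ n)).
  - exists N => // n /= Hn.
    have JS : (Jn N j n <= 2 ^ n)%N by exact: Jle.
    rewrite -(@dyadJ R N j n Hn) -dyadS /s !dyad_le /succ_idx.
    by rewrite leq_min leqnSn JS geq_minl.
  - exact: cvg_cst.
  - by rewrite -[X in _ --> X]addr0; apply: cvgD; [exact: cvg_cst | exact: inv2n_cvg].
have he : (fun n => (x (s n) - x (dyad N j)) ^+ 2) @ \oo --> 0.
  rewrite [X in _ --> X](_ : _ = (x (dyad N j) - x (dyad N j)) ^+ 2); last by rewrite subrr expr0n.
  apply: cvg_sq; apply: cvgB; [exact: cont_seq | exact: cvg_cst].
apply: cvg_trans he; apply: near_eq_cvg.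
exists N => // n /= Hn.
by rewrite (@Q_decomp R x N j n hj Hn) addrAC subrr add0r.
Qed.

Lemma ell1_rec (R : realType) (x : R -> R) t n :
  ell1_seq x t n.+1 = (ell1_seq x t n + ell2_seq x t n) / 2.
Proof.
rewrite /ell1_seq /ell2_seq big_nat_recr //=.
by rewrite exprS; field; rewrite pow2_neq0.
Qed.

Lemma fl_J (R : realType) N j n : (0 < j)%N -> (j <= 2 ^ N)%N -> (N <= n)%N ->
  fl n (@dyad R N j) = (Jn N j n).-1.
Proof.
move=> j0 hj Hn.
have J0 : (0 < Jn N j n)%N by rewrite /Jn muln_gt0 j0 expn_gt0.
have t01 := @dyad_01 R N j hj.
have tpos : 0 < @dyad R N j.
  by rewrite /dyad divr_gt0 ?pow2_gt0 // ltr0n.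
have E : (2%:R ^+ n - 1) * @dyad R N j = (Jn N j n)%:R - dyad N j.
  rewrite -(@dyadJ R N j n Hn) /dyad; field; exact: pow2_neq0.
rewrite /fl E; apply/eqP; rewrite truncn_eq; last first.
  by rewrite subr_ge0 -(@dyadJ R N j n Hn) /dyad ler_pdivrMr ?pow2_gt0 // ler_pMr ?ltr0n ?expn_gt0 // -natrX ler1n expn_gt0.
rewrite prednK //; move: t01 tpos; rewrite -(prednK J0) -natr1.
set m := (Jn N j n).-1; set T := dyad N j; move=> /andP [_ h1] h0.
apply/andP; split; first lra.
lra.
Qed.

Lemma sum_double (R : realType) (f : nat -> R) m :
  \sum_(0 <= k < m.*2) f k = \sum_(0 <= k < m) (f k.*2 + f k.*2.+1).
Proof.
elim: m => [|m IH]; first by rewrite !big_geq.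
by rewrite doubleS !big_nat_recr //= IH addrA.
Qed.

Lemma P_rec (R : realType) (x : R -> R) N j n :
  (0 < j)%N -> (j <= 2 ^ N)%N -> (N <= n)%N ->
  Pseq x N j n.+1 = (Pseq x N j n + ell2_seq x (dyad N j) n) / 2.
Proof.
move=> j0 hj Hn.
have J0 : (0 < Jn N j n)%N by rewrite /Jn muln_gt0 j0 expn_gt0.
have JS : Jn N j n.+1 = (Jn N j n).*2.
  by rewrite /Jn subSn // expnS -mul2n mulnCA.
rewrite /ell2_seq (@fl_J R N j n j0 hj Hn) (prednK J0) /Pseq JS sum_double.
rewrite mulr_sumr -big_split /= mulr_suml.
apply: eq_big_nat => k _.
rewrite /fs_coef exprMn sqr_sqrtr ?ltW ?pow2_gt0 //.
have -> : (2 * k + 1)%N = (k.*2).+1 by rewrite -mul2n addn1.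
rewrite -(dyad_double R n k) -(dyad_double R n k.+1) doubleS.
rewrite (_ : (k.*2.+1)%:R / 2%:R ^+ n.+1 = dyad n.+1 k.*2.+1) //.
set a := x (dyad n.+1 k.*2); set b := x (dyad n.+1 k.*2.+1); set c := x (dyad n.+1 k.*2.+2).
by field; rewrite pow2_neq0.
Qed.

Lemma ell2_zero (R : realType) (x : R -> R)
  (hx : {within `[0%R, 1%R], continuous x}) :
  ell2_seq x 0 @ \oo --> 0.
Proof.
have s2 : (fun n => @dyad R n 1) @ \oo --> 0.
  have -> : (fun n => @dyad R n 1) = (fun n => (2^-1) ^+ n).
    by apply/funext => n; rewrite /dyad exprVn mul1r.
  exact: inv2n_cvg.
have s1 : (fun n => @dyad R n.+1 1) @ \oo --> 0.
  by rewrite (cvg_shiftS (fun n => @dyad R n 1)).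
have d01 : forall n, 0 <= @dyad R n 1 <= 1 by move=> n; apply: dyad_01; rewrite expn_gt0.
have z01 : (0:R) <= (0:R) <= (1:R) by rewrite lexx ler01.
have -> : ell2_seq x 0 = (fun n => (2 * x (dyad n.+1 1) - x 0 - x (dyad n 1)) ^+ 2).
  apply/funext => n; rewrite /ell2_seq /fl mulr0 truncn0 big_nat1 /fs_coef.
  rewrite exprMn sqr_sqrtr ?ltW ?pow2_gt0 // mulrA mulVf ?pow2_neq0 // mul1r.
  by rewrite /dyad !mul0r muln0 add0n.
rewrite [X in _ --> X](_ : _ = (2 * x 0 - x 0 - x 0) ^+ 2); last first.
  by rewrite mulr2n mulrDl mul1r addrK subrr expr0n.
apply: cvg_sq; apply: cvgB; last exact: cont_seq.
apply: cvgB; last exact: cvg_cst.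
by apply: cvgMr; apply: cont_seq.
Qed.

Lemma lim_uniq (R : realType) (u : nat -> R) (a b : R) :
  u @ \oo --> a -> u @ \oo --> b -> a = b.
Proof. by move=> ha hb; rewrite -(cvg_lim _ ha) // -(cvg_lim _ hb). Qed.

Theorem proposition2p1 (R : realType) (x : R -> R)
  (hx : {within `[0%R, 1%R], continuous x}) (t : R)
  (ht : in_dyadic_partitions t) :
  [/\ (cvgn (qv_approx x t) <-> cvgn (ell1_seq x t)),
      (cvgn (qv_approx x t) <-> cvgn (ell2_seq x t)) &
      (cvgn (qv_approx x t) ->
         limn (qv_approx x t) = limn (ell1_seq x t) /\
         limn (qv_approx x t) = limn (ell2_seq x t))].
Proof.
case: ht => N [j [hj ->]].
have hQP := @QP_cvg R x hx N j hj.
have h12 := @ell12 R _ _ (@ell1_rec R x (dyad N j)).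
case: (posnP j) => [j0 | j0].
- subst j.
  have t0 : @dyad R N 0 = 0 by rewrite /dyad mul0r.
  have hQ : qv_approx x (dyad N 0) @ \oo --> 0.
    apply/(@diff0_iff R _ _ 0 hQP).
    rewrite (_ : Pseq x N 0 = fun=> 0); first exact: cvg_cst.
    by apply/funext => n; rewrite /Pseq /Jn mul0n big_geq.
  have h2 : ell2_seq x (dyad N 0) @ \oo --> 0 by rewrite t0; exact: (@ell2_zero R x hx).
  have h1 : ell1_seq x (dyad N 0) @ \oo --> 0 := (h12 0).2 h2.
  apply: assemble3 => L; split => HL.
  + by rewrite -(@lim_uniq R _ _ _ hQ HL).
  + by rewrite -(@lim_uniq R _ _ _ h1 HL).
  + by rewrite -(@lim_uniq R _ _ _ hQ HL).
  + by rewrite -(@lim_uniq R _ _ _ h2 HL).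
- have hrec := fun n (Hn : (N <= n)%N) => @P_rec R x N j n j0 hj Hn.
  have hPE : forall L : R, Pseq x N j @ \oo --> L <-> ell2_seq x (dyad N j) @ \oo --> L.
    move=> L; split => h; last exact: averaging hrec h.
    have h' : (fun n => Pseq x N j n.+1) @ \oo --> L by rewrite (cvg_shiftS (Pseq x N j)).
    have hc : (fun n => 2 * Pseq x N j n.+1 - Pseq x N j n) @ \oo --> 2 * L - L.
      by apply: cvgB => //; apply: cvgMr.
    rewrite (_ : L = 2 * L - L); last by ring.
    apply: cvg_trans hc; apply: near_eq_cvg.
    exists N => // n /= Hn.
    by rewrite hrec //; field.
  apply: assemble3 => L.
  + by rewrite (@diff0_iff R _ _ L hQP) hPE h12.
  + by rewrite (@diff0_iff R _ _ L hQP) hPE.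
Qed.
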